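(* Let $n,x$ be integers with $1<x<n$, so that $G=C_{2n}(x,1,n)$ is a $5$-regular circulant graph. If $\tfrac{n}{2}<x\leq \tfrac{2n}{3}$, then $G$ is word-representable and $R(G)\leq 5$.
   Context: Two distinct letters $x,y$ alternate in a word $w$ if, after deleting all other letters from $w$, the resulting word is of the form $xyxy\cdots$ or $yxyx\cdots$ (of even or odd length). A graph $G=(V,E)$ is word-representable if there is a word $w$ over the alphabet $V$, containing every letter of $V$ at least once, such that for all distinct $x,y\in V$, $xy\in E$ if and only if $x$ and $y$ alternate in $w$. A word is $k$-uniform if every letter occurs in it exactly $k$ times; $G$ is $k$-representable if some $k$-uniform word represents it, and the representation number $R(G)$ of a word-representable graph $G$ is the least such $k$. For an integer $m$ and a set $R$ of positive integers each at most $m/2$, the circulant graph $C_m(R)$ has vertex set $\{0,1,\dots,m-1\}$, with $i$ and $j$ adjacent iff $\min(|i-j|,\,m-|i-j|)\in R$. $C_{2n}(x,1,n)$ denotes the circulant graph on $2n$ vertices with jump set $\{1,x,n\}$; it is $5$-regular exactly when $1<x<n$. *)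

(* Defs.v *)
From mathcomp Require Import all_boot.
Set Implicit Arguments. Unset Strict Implicit. Unset Printing Implicit Defensive.

Definition alternate (T : eqType) (w : seq T) (x y : T) : bool :=
  let s := [seq z <- w | (z == x) || (z == y)] in
  all (fun p => p.1 != p.2) (zip s (behead s)).

Definition represents (V : finType) (adj : rel V) (w : seq V) : Prop :=
  (forall v : V, v \in w) /\
  (forall x y : V, x != y -> (adj x y <-> alternate w x y)).

Definition word_representable (V : finType) (adj : rel V) : Prop :=
  exists w : seq V, represents adj w.

Definition k_uniform (V : finType) (k : nat) (w : seq V) : bool :=
  [forall v : V, count_mem v w == k].

Definition k_representable (V : finType) (adj : rel V) (k : nat) : Prop :=
  exists w : seq V, k_uniform k w /\ represents adj w.

Definition circ_dist (m : nat) (i j : 'I_m) : nat :=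
  let d := if i <= j then j - i else i - j in minn d (m - d).

Definition circulant (m : nat) (R : pred nat) : rel 'I_m :=
  fun i j => (i != j) && (circ_dist i j \in R).

Definition C2n_x1n (n x : nat) : rel 'I_(2 * n) :=
  circulant (fun d : nat => [|| d == 1, d == x | d == n]).
Arguments C2n_x1n : clear implicits.

(* Main.v *)
Require Import Defs.
From mathcomp Require Import all_boot.
From mathcomp Require Import zify.
Set Implicit Arguments. Unset Strict Implicit. Unset Printing Implicit Defensive.

Definition neqr (T : eqType) : rel T := fun u v => u != v.

Lemma all_zip_sorted (T : eqType) (t : seq T) :
  all (fun p => p.1 != p.2) (zip t (behead t)) = sorted (@neqr T) t.
Proof.
case: t => // z t; elim: t z => // y t IH z /=.
by move: (IH y) => /= ->.
Qed.

Lemma alternateE (T : eqType) (w : seq T) a b :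
  alternate w a b = sorted (@neqr T) [seq z <- w | (z == a) || (z == b)].
Proof. by rewrite /alternate all_zip_sorted. Qed.

Lemma alternateC (T : eqType) (w : seq T) a b : alternate w a b = alternate w b a.
Proof. by rewrite !alternateE; congr sorted; apply: eq_filter => z; rewrite orbC. Qed.

Lemma alternate_map_in (T1 T2 : eqType) (g : T1 -> T2) (w : seq T1) a b :
  a != b -> g a != g b ->
  {in w, forall z, (g z == g a) = (z == a) /\ (g z == g b) = (z == b)} ->
  alternate (map g w) (g a) (g b) = alternate w a b.
Proof.
move=> nab ngab H; rewrite !alternateE filter_map.
rewrite (@eq_in_filter _ _ (fun z => (z == a) || (z == b))); last first.
  by move=> z /H [H1 H2]; rewrite /preim /= H1 H2.
rewrite sorted_map.
set t := filter _ w.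
have allt : all (fun z => (z == a) || (z == b)) t by apply/allP => z; rewrite mem_filter => /andP[].
case: t allt => // z t allt.
apply: (eq_in_path (P := fun z => (z == a) || (z == b))) => //.
move=> u v /orP[] /eqP -> /orP[] /eqP -> /=; rewrite /neqr ?eqxx //.
  by rewrite ngab nab.
by rewrite eq_sym ngab eq_sym nab.
Qed.

Lemma filter_rot (T : Type) (P : pred T) k (s : seq T) :
  [seq z <- rot k s | P z] = rot (size [seq z <- take k s | P z]) [seq z <- s | P z].
Proof.
rewrite [in RHS](_ : [seq z <- s | P z] = [seq z <- take k s | P z] ++ [seq z <- drop k s | P z]); last by rewrite -filter_cat cat_take_drop.
by rewrite rot_size_cat /rot filter_cat.
Qed.

Lemma path_count (T : eqType) (t : seq T) (x y : T) :
  x != y -> path (@neqr T) x t -> all (fun z => (z == x) || (z == y)) t ->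
  count_mem x (x :: t) = count_mem y (x :: t) + (last x t == x).
Proof.
elim: t x y => [|z t IH] x y nxy /=; first by rewrite eqxx (negbTE nxy).
move=> /andP[nxz pt] /andP[zxy allt].
have zy : z = y.
  by case/orP: zxy => /eqP // zx; rewrite zx /neqr eqxx in nxz.
subst z.
have nyx : y != x by rewrite eq_sym.
have allt' : all (fun z => (z == y) || (z == x)) t.
  by apply: sub_all allt => z; rewrite orbC.
have := IH y x nyx pt allt' => /= H.
have Hx : (x == y) = false by apply/negbTE.
have Hy : (y == x) = false by apply/negbTE.
move: H; rewrite eqxx Hx Hy /=.
have : (last y t == y) || (last y t == x).
  have := mem_last y t; rewrite inE => /orP[-> // | ].
  by move/(allP allt) => /orP[->|->]; rewrite ?orbT.
case/orP=> /eqP ->; rewrite !eqxx ?Hx ?Hy /=; lia.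
Qed.

Lemma sorted_cycle (T : eqType) (t : seq T) a b :
  a != b -> sorted (@neqr T) t -> all (fun z => (z == a) || (z == b)) t ->
  count_mem a t = count_mem b t -> cycle (@neqr T) t.
Proof.
move=> nab; case: t => // x t sxt alltt ceq.
move: sxt alltt => /= pt /andP[xab allt].
rewrite rcons_path pt /= /neqr.
case/orP: xab => /eqP ?; subst x.
- have := path_count nab pt allt; rewrite ceq.
  case: (last a t == a) => //=; lia.
- have nba : b != a by rewrite eq_sym.
  have allt' : all (fun z => (z == b) || (z == a)) t.
    by apply: sub_all allt => z; rewrite orbC.
  have := path_count nba pt allt'; rewrite -ceq.
  case: (last b t == b) => //=; lia.
Qed.

Lemma cycle_sorted (T : Type) (e : rel T) (t : seq T) : cycle e t -> sorted e t.
Proof. by case: t => // x t; rewrite /cycle rcons_path => /andP[]. Qed.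

Lemma alternate_rot (T : eqType) (s : seq T) a b k :
  a != b -> count_mem a s = count_mem b s ->
  alternate (rot k s) a b = alternate s a b.
Proof.
move=> nab ceq; rewrite !alternateE filter_rot.
set t := filter _ s.
have allt : all (fun z => (z == a) || (z == b)) t.
  by apply/allP => z; rewrite mem_filter => /andP[].
have cf : forall c, (c == a) || (c == b) -> count_mem c t = count_mem c s.
  move=> c Hc; rewrite count_filter; apply: eq_count => z /=.
  by case: eqP => //= ->.
have ct : count_mem a t = count_mem b t.
  by rewrite !cf ?eqxx ?orbT.
set r := rot _ t.
have prt : perm_eq r t by rewrite perm_rot.
have allr : all (fun z => (z == a) || (z == b)) r by rewrite (perm_all _ prt).
have cr : count_mem a r = count_mem b r by rewrite !(permP prt).
apply/idP/idP => H.
- have := sorted_cycle nab H allr cr; rewrite rot_cycle; exact: cycle_sorted.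
- have := sorted_cycle nab H allt ct; rewrite -(rot_cycle (size (filter (fun z => (z == a) || (z == b)) (take k s)))).
  exact: cycle_sorted.
Qed.

Lemma filter_mkseq (T : Type) (f : nat -> T) L (P : pred T) :
  [seq z <- mkseq f L | P z] = map f [seq k <- iota 0 L | P (f k)].
Proof. by rewrite /mkseq filter_map. Qed.

Lemma filter_iota_eq (P : pred nat) L ps :
  sorted ltn ps -> (forall k, (k \in ps) = (k < L) && P k) ->
  [seq k <- iota 0 L | P k] = ps.
Proof.
move=> sps mps; apply: (irr_sorted_eq ltn_trans ltnn) => //.
  exact: (sorted_filter ltn_trans _ (iota_ltn_sorted 0 L)).
by move=> k; rewrite mem_filter mem_iota mps add0n andbC.
Qed.

Lemma nonalt (T : eqType) (f : nat -> T) L a b p q :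
  p < q -> q < L -> f p = a -> f q = a -> (forall r, p < r < q -> f r != b) ->
  ~~ alternate (mkseq f L) a b.
Proof.
move=> pq qL fp fq H; rewrite alternateE filter_mkseq.
have -> : iota 0 L = iota 0 p ++ p :: iota p.+1 (q - p.+1) ++ q :: iota q.+1 (L - q.+1).
  have E : L = p + ((q - p.+1).+1 + (L - q.+1).+1) by lia.
  rewrite {1}E iotaD iotaD add0n /=.
  by have -> : p + (q - p.+1).+1 = q by lia.
rewrite filter_cat /= filter_cat /= fp fq eqxx /= !map_cat /= map_cat /= fp fq.
set C := [seq f i | i <- [seq k <- iota p.+1 _ | _]].
have allC : all (pred1 a) C.
  apply/allP => z /mapP [k]; rewrite mem_filter mem_iota => /andP [Pk rk] ->.
  have : f k != b by apply: H; lia.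
  by case/orP: Pk => // /eqP -> ; rewrite eqxx.
apply/negP; rewrite sorted_cat_cons => /andP [_].
case: C allC => [|c C] /=; first by rewrite /neqr eqxx.
by case/andP => /eqP -> _; rewrite /neqr eqxx.
Qed.

Definition ee (n x s : nat) : nat :=
  match s with 0 => 0 | 1 => 2 * n - 1 | 2 => 2 * n - x | 3 => n | _ => x end.

Definition ff (n x p : nat) : nat := (p %/ 5 + ee n x (p %% 5)) %% (2 * n).

Definition wn (n x : nat) : seq nat := mkseq (ff n x) (5 * (2 * n)).

Lemma modn2 a m : a < 2 * m -> a %% m = if a < m then a else a - m.
Proof.
move=> h; case: ifP => h2; first by rewrite modn_small.
have {1}-> : a = (a - m) + m by lia.
by rewrite modnDr modn_small //; lia.
Qed.

Lemma modv a m v : v < m -> (a = v \/ a = v + m) -> a %% m = v.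
Proof. by move=> vm [->|->]; rewrite ?modnDr modn_small. Qed.

Lemma ff5 n x b s : s < 5 -> ff n x (5 * b + s) = (b + ee n x s) %% (2 * n).
Proof.
move=> hs; rewrite /ff.
have -> : (5 * b + s) %/ 5 = b by lia.
by have -> : (5 * b + s) %% 5 = s by lia.
Qed.

Lemma ffdec n x k : k < 5 * (2 * n) ->
  exists b s, [/\ k = 5 * b + s, s < 5, b < 2 * n & ff n x k = (b + ee n x s) %% (2 * n)].
Proof.
move=> hk; exists (k %/ 5), (k %% 5); split; try lia.
by rewrite /ff.
Qed.

Lemma eq5 b b' s s' : s < 5 -> s' < 5 -> (5 * b + s == 5 * b' + s') = (b == b') && (s == s').
Proof. move=> h h'; lia. Qed.

Ltac memtac n x :=
  let k := fresh "k" in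
  move=> k; rewrite !inE;
  case: (ltnP k (5 * (2 * n))) => [/(ffdec x) [? [[|[|[|[|[|?]]]]] [-> ? ? ->]]] | ?]; try lia;
  rewrite ?eq5 //= ?andbT ?andbF ?orbF ?orbT //=;
  (rewrite modn2; [case: ifP => ? ; lia | lia]).

Lemma mem0 n x : 1 < x -> x < n -> n < 2 * x -> 3 * x <= 2 * n ->
  forall k, (k \in [:: 5*0+0; 5*1+1; 5*x+2; 5*n+3; 5*(2*n-x)+4]) =
            (k < 5 * (2 * n)) && (ff n x k == 0).
Proof. move=> h1 h2 h3 h4. memtac n x. Qed.

Lemma count0 n x : 1 < x -> x < n -> n < 2 * x -> 3 * x <= 2 * n ->
  count_mem 0 (wn n x) = 5.
Proof.
move=> h1 h2 h3 h4.
rewrite -size_filter /wn filter_mkseq.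
rewrite (@filter_iota_eq (fun k => ff n x k == 0) _ [:: 5*0+0; 5*1+1; 5*x+2; 5*n+3; 5*(2*n-x)+4]) //.
  by rewrite /=; lia.
exact: mem0.
Qed.

Lemma ff_add n x i c : ff n x (i + 5 * c) = (ff n x i + c) %% (2 * n).
Proof.
rewrite /ff modnDml.
have -> : (i + 5 * c) %/ 5 = i %/ 5 + c by lia.
have -> : (i + 5 * c) %% 5 = i %% 5 by lia.
congr (_ %% _); lia.
Qed.

Lemma ff_lt n x i : 0 < n -> ff n x i < 2 * n.
Proof. by move=> n0; rewrite /ff ltn_pmod //; lia. Qed.

Lemma wn_rot n x c : 0 < n -> c <= 2 * n ->
  map (fun k => (k + c) %% (2 * n)) (wn n x) = rot (5 * c) (wn n x).
Proof.
move=> n0 c2n; rewrite /wn /mkseq -map_rot /rot drop_iota take_iota.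
have -> : minn (5 * c) (5 * (2 * n)) = 5 * c by lia.
set L1 := 5 * (2 * n) - 5 * c.
have E : 5 * (2 * n) = L1 + 5 * c by rewrite /L1; lia.
rewrite {1}E iotaD !map_cat add0n.
congr (_ ++ _).
- rewrite -map_comp.
  have -> : iota (5 * c) L1 = map (addn (5 * c)) (iota 0 L1).
    by rewrite -iotaDl addn0.
  rewrite -map_comp; apply: eq_map => i /=.
  by rewrite [5 * c + i]addnC ff_add.
- rewrite -map_comp.
  have -> : iota L1 (5 * c) = map (addn L1) (iota 0 (5 * c)).
    by rewrite -iotaDl addn0.
  rewrite -map_comp; apply: eq_map => i /=.
  rewrite -ff_add.
  have -> : L1 + i + 5 * c = i + 5 * (2 * n) by rewrite /L1; lia.
  by rewrite ff_add modnDr modn_small //; exact: ff_lt.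
Qed.

Lemma wn_lt n x z : 0 < n -> z \in wn n x -> z < 2 * n.
Proof. by move=> n0 /mapP [i _ ->]; exact: ff_lt. Qed.

Lemma sig_eq n c z a : z < 2 * n -> a < 2 * n ->
  ((z + c) %% (2 * n) == (a + c) %% (2 * n)) = (z == a).
Proof. by move=> hz ha; rewrite eqn_modDr !modn_small. Qed.

Lemma count_all n x v : 1 < x -> x < n -> n < 2 * x -> 3 * x <= 2 * n ->
  v < 2 * n -> count_mem v (wn n x) = 5.
Proof.
move=> h1 h2 h3 h4 hv.
have n0 : 0 < n by lia.
have -> : count_mem v (wn n x) =
   count_mem ((v + (2 * n - v)) %% (2 * n)) (map (fun k => (k + (2 * n - v)) %% (2 * n)) (wn n x)).
  rewrite [in RHS]count_map; apply: eq_in_count => z hz /=.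
  by rewrite /preim /= sig_eq // (wn_lt n0 hz).
rewrite wn_rot; last lia; last done.
have -> : (v + (2 * n - v)) %% (2 * n) = 0 by rewrite subnKC ?modnn //; lia.
have pr : perm_eq (rot (5 * (2 * n - v)) (wn n x)) (wn n x) by rewrite perm_rot.
by rewrite (permP pr) count0.
Qed.

Lemma alt_shift n x a b c : 1 < x -> x < n -> n < 2 * x -> 3 * x <= 2 * n ->
  a < 2 * n -> b < 2 * n -> a != b -> c <= 2 * n ->
  alternate (wn n x) a b =
  alternate (wn n x) ((a + c) %% (2 * n)) ((b + c) %% (2 * n)).
Proof.
move=> h1 h2 h3 h4 ha hb nab hc.
have n0 : 0 < n by lia.
rewrite -(@alternate_map_in _ _ (fun k => (k + c) %% (2 * n)) _ a b) //.
- have Ha : (a + c) %% (2*n) < 2*n by rewrite ltn_pmod //; lia.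
  have Hb : (b + c) %% (2*n) < 2*n by rewrite ltn_pmod //; lia.
  rewrite wn_rot // alternate_rot //.
  + by rewrite sig_eq.
  + by rewrite !count_all.
- by rewrite sig_eq.
- by move=> z hz; rewrite !sig_eq // (wn_lt n0 hz).
Qed.

Ltac valtac :=
  repeat (congr cons; first by apply: modv; lia).

Lemma alt1 n x : 1 < x -> x < n -> n < 2 * x -> 3 * x <= 2 * n ->
  alternate (wn n x) 0 1.
Proof.
move=> h1 h2 h3 h4.
rewrite alternateE /wn filter_mkseq.
rewrite (@filter_iota_eq (fun k => (ff n x k == 0) || (ff n x k == 1)) _
  [:: 5*0+0; 5*1+0; 5*1+1; 5*2+1; 5*x+2; 5*(x+1)+2; 5*n+3; 5*(n+1)+3; 5*(2*n-x)+4; 5*(2*n-x+1)+4]).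
- have -> : map (ff n x) [:: 5*0+0; 5*1+0; 5*1+1; 5*2+1; 5*x+2; 5*(x+1)+2; 5*n+3; 5*(n+1)+3; 5*(2*n-x)+4; 5*(2*n-x+1)+4]
      = [:: 0; 1; 0; 1; 0; 1; 0; 1; 0; 1].
    rewrite /= !ff5 //=; valtac.
  by [].
- by rewrite /=; lia.
- memtac n x.
Qed.

Lemma altx n x : 1 < x -> x < n -> n < 2 * x -> 3 * x <= 2 * n ->
  alternate (wn n x) 0 x.
Proof.
move=> h1 h2 h3 h4.
rewrite alternateE /wn filter_mkseq.
rewrite (@filter_iota_eq (fun k => (ff n x k == 0) || (ff n x k == x)) _
  [:: 5*0+0; 5*0+4; 5*1+1; 5*x+0; 5*x+2; 5*(x+1)+1; 5*n+3; 5*(2*x)+2; 5*(2*n-x)+4; 5*(n+x)+3]).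
- have -> : map (ff n x) [:: 5*0+0; 5*0+4; 5*1+1; 5*x+0; 5*x+2; 5*(x+1)+1; 5*n+3; 5*(2*x)+2; 5*(2*n-x)+4; 5*(n+x)+3]
      = [:: 0; x; 0; x; 0; x; 0; x; 0; x].
    rewrite /= !ff5 //=; valtac.
  by rewrite /= /neqr; lia.
- by rewrite /=; lia.
- memtac n x.
Qed.

Lemma altn n x : 1 < x -> x < n -> n < 2 * x -> 3 * x <= 2 * n ->
  alternate (wn n x) 0 n.
Proof.
move=> h1 h2 h3 h4.
rewrite alternateE /wn filter_mkseq.
rewrite (@filter_iota_eq (fun k => (ff n x k == 0) || (ff n x k == n)) _
  [:: 5*0+0; 5*0+3; 5*1+1; 5*(n-x)+4; 5*x+2; 5*n+0; 5*n+3; 5*(n+1)+1; 5*(2*n-x)+4; 5*(n+x)+2]).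
- have -> : map (ff n x) [:: 5*0+0; 5*0+3; 5*1+1; 5*(n-x)+4; 5*x+2; 5*n+0; 5*n+3; 5*(n+1)+1; 5*(2*n-x)+4; 5*(n+x)+2]
      = [:: 0; n; 0; n; 0; n; 0; n; 0; n].
    rewrite /= !ff5 //=; valtac.
  by rewrite /= /neqr; lia.
- by rewrite /=; lia.
- memtac n x.
Qed.

Lemma main_nat n x u v : 1 < x -> x < n -> n < 2 * x -> 3 * x <= 2 * n ->
  u < v -> v < 2 * n ->
  alternate (wn n x) u v =
  [|| v - u == 1, v - u == x, v - u == n, v - u == 2 * n - x | v - u == 2 * n - 1].
Proof.
move=> h1 h2 h3 h4 uv v2n.
have n0 : 0 < n by lia.
have nuv : u != v by lia.
case: (boolP [|| v - u == 1, v - u == x | v - u == n]) => H1.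
  rewrite (@alt_shift n x u v (2 * n - u)) //; try lia.
  have -> : (u + (2 * n - u)) %% (2 * n) = 0 by rewrite subnKC ?modnn //; lia.
  have -> : (v + (2 * n - u)) %% (2 * n) = v - u by apply: modv; lia.
  case/or3P: H1 => /eqP E; rewrite E ?alt1 ?altx ?altn //; lia.
case: (boolP ((v - u == 2 * n - x) || (v - u == 2 * n - 1))) => H2.
  rewrite (@alt_shift n x u v (2 * n - v)) //; try lia.
  have -> : (v + (2 * n - v)) %% (2 * n) = 0 by rewrite subnKC ?modnn //; lia.
  rewrite alternateC.
  case/orP: H2 => /eqP E.
  - have -> : (u + (2 * n - v)) %% (2 * n) = x by apply: modv; lia.
    rewrite altx //; lia.
  - have -> : (u + (2 * n - v)) %% (2 * n) = 1 by apply: modv; lia.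
    rewrite alt1 //; lia.
suff -> : alternate (wn n x) u v = false by move: H1 H2; lia.
apply/negbTE; apply: (@nonalt _ (ff n x) _ u v (5 * u) (5 * u + 6)); try lia.
- have := @ff5 n x u 0 isT; rewrite addn0 => -> /=; apply: modv; lia.
- have -> : 5 * u + 6 = 5 * (u + 1) + 1 by lia.
  rewrite ff5 //=; apply: modv; lia.
- move=> r hr; have hL : r < 5 * (2 * n) by lia.
  move: hr; case: (ffdec x hL) => b [[|[|[|[|[|s]]]]] [-> ? _ ->]] /= hr; try lia;
  (rewrite modn2; [case: ifP => ? ; lia | lia]).
Qed.

Lemma circ_dist_sym m (i j : 'I_m) : circ_dist i j = circ_dist j i.
Proof.
rewrite /circ_dist; case: (leqP i j) => h1; case: (leqP j i) => h2 //; try lia.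
Qed.

Lemma adj_sym n x (i j : 'I_(2 * n)) : C2n_x1n n x i j = C2n_x1n n x j i.
Proof. by rewrite /C2n_x1n /circulant circ_dist_sym eq_sym. Qed.

Lemma adj_nat n x (i j : 'I_(2 * n)) : x < n -> i < j ->
  C2n_x1n n x i j =
  [|| j - i == 1, j - i == x, j - i == n, j - i == 2 * n - x | j - i == 2 * n - 1].
Proof.
move=> h2 ij; have jn := ltn_ord j.
rewrite /C2n_x1n /circulant /circ_dist (ltnW ij) unfold_in /=.
have -> : (i != j) = true by apply/eqP => E; rewrite E ltnn in ij.
rewrite /=; lia.
Qed.

Definition wo n x (Hm : 0 < 2 * n) : seq 'I_(2 * n) :=
  map (fun k => Ordinal (ltn_pmod k Hm)) (mkseq (fun p => p %/ 5 + ee n x (p %% 5)) (5 * (2 * n))).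

Lemma wo_val n x Hm : map val (@wo n x Hm) = wn n x.
Proof. by rewrite /wo -map_comp /wn /mkseq -map_comp. Qed.

Theorem theorem27 (n x : nat) :
  1 < x -> x < n ->
  n < 2 * x -> 3 * x <= 2 * n ->
  word_representable (C2n_x1n n x) /\
  exists k, 0 < k <= 5 /\ k_representable (C2n_x1n n x) k.
Proof.
move=> h1 h2 h3 h4.
have Hm : 0 < 2 * n by lia.
set w := wo x Hm.
have cnt : forall v : 'I_(2 * n), count_mem v w = 5.
  move=> v; rewrite -(count_all h1 h2 h3 h4 (ltn_ord v)) -(wo_val x Hm) [RHS]count_map /w.
  by apply: eq_count => z /=; rewrite /preim /= val_eqE.
have altv : forall i j : 'I_(2 * n), i != j -> alternate w i j = alternate (wn n x) i j.
  move=> i j nij; rewrite -(wo_val x Hm) alternate_map_in //.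
have rep : represents (C2n_x1n n x) w.
  split.
    by move=> v; rewrite -has_pred1 has_count cnt.
  move=> i j nij; rewrite altv //.
  case: (ltngtP i j) => hij.
  - by rewrite adj_nat // main_nat.
  - rewrite adj_sym alternateC adj_nat // main_nat //.
  - by case/eqP: nij; apply: val_inj.
split; first by exists w.
exists 5; split => //; exists w; split => //.
by apply/forallP => v; rewrite cnt.
Qed.
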